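(* $T^2\Lambda=\Xi_2\oplus(l-\psi)T\Lambda$ (internal direct sum).
   Context: Let $l$ be an odd prime, $\Lambda=\mathbb{Z}_l[[T]]$, and let $\psi$ be the continuous $\mathbb{Z}_l$-algebra endomorphism of $\Lambda$ with $\psi(T)=(1+T)^l-1$; $(l-\psi)x=lx-\psi(x)$. Let $\Lambda_\wedge=\{\sum_{k\in\mathbb{Z}}x_kT^k: x_k\in\mathbb{Z}_l,\ x_k\to0 \text{ as } k\to-\infty\}$, $\Xi=\{\sum_k x_kT^k\in\Lambda_\wedge: x_k=0 \text{ whenever } l\mid k\}$, and for $s\in\mathbb{Z}$, $\Xi_s=\{\sum_{k\ge s}x_kT^k\in\Xi\}$. Thus $\Xi_2$ consists of power series $\sum_{k\ge2,\,l\nmid k}x_kT^k\in\Lambda$. *)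

(* Defs.v *)
From HB Require Import structures.
From mathcomp Require Import all_boot all_order all_algebra.
Set Implicit Arguments. Unset Strict Implicit. Unset Printing Implicit Defensive.
Import Order.TTheory GRing.Theory Num.Theory.
Local Open Scope ring_scope.

(* ---------- l-adic integers Z_l as the inverse limit lim Z/l^n Z ----------
   An element of Z_l is represented by a coherent sequence of integers
   x : nat -> int with x (n+1) = x n (mod l^n); two representatives denote
   the same l-adic integer iff x n = y n (mod l^n) for every n. *)
Definition zl_coherent (l : nat) (x : nat -> int) : Prop :=
  forall n : nat, (x n.+1 == x n %[mod (l ^ n)%N%:Z])%Z.

Definition zl_eq (l : nat) (x y : nat -> int) : Prop :=
  forall n : nat, (x n == y n %[mod (l ^ n)%N%:Z])%Z.

(* ---------- Lambda = Z_l[[T]] ----------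
   A power series F has k-th coefficient F k : nat -> int (an element of Z_l). *)
Definition pser := nat -> nat -> int.

Definition is_series (l : nat) (F : pser) : Prop :=
  forall k : nat, zl_coherent l (F k).

Definition ps_eq (l : nat) (F G : pser) : Prop :=
  forall k : nat, zl_eq l (F k) (G k).

Definition ps0 : pser := fun _ _ => 0.
Definition ps_add (F G : pser) : pser := fun k n => F k n + G k n.
Definition ps_sub (F G : pser) : pser := fun k n => F k n - G k n.
Definition ps_scale (c : int) (F : pser) : pser := fun k n => c * F k n.

Definition ps_mulT (F : pser) : pser :=
  fun k n => if k is k'.+1 then F k' n else 0.

Definition psi_coef (l j k : nat) : int :=
  ((('X + 1) ^+ l - 1) ^+ j : {poly int})`_k.

(* psi(F) = F((1+T)^l - 1); since (1+T)^l - 1 has no constant term,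
   the k-th coefficient is sum_{j <= k} F_j * [T^k]((1+T)^l-1)^j. *)
Definition ps_psi (l : nat) (F : pser) : pser :=
  fun k n => \sum_(j < k.+1) psi_coef l j k * F j n.

Definition l_minus_psi (l : nat) (F : pser) : pser :=
  ps_sub (ps_scale l%:Z F) (ps_psi l F).

Definition in_T2Lambda (l : nat) (F : pser) : Prop :=
  exists G, is_series l G /\ ps_eq l F (ps_mulT (ps_mulT G)).

Definition in_Xi2 (l : nat) (F : pser) : Prop :=
  is_series l F /\
  forall k : nat, ((k < 2)%N || (l %| k)%N) -> zl_eq l (F k) (fun _ => 0).

(* Main.v *)
Require Import Defs.
From HB Require Import structures.
From mathcomp Require Import all_boot all_order all_algebra.
Set Implicit Arguments. Unset Strict Implicit. Unset Printing Implicit Defensive.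
Import Order.TTheory GRing.Theory Num.Theory.
Local Open Scope ring_scope.

Lemma psi_mod (l : nat) (hl : prime l) j k :
  (l%:Z %| psi_coef l j k - (k == (l * j)%N)%:R)%Z.
Proof.
rewrite (dvdz_pcharf (pchar_Fp hl)) rmorphB /= -subr_eq0 subr0.
rewrite /psi_coef -(coef_map (intr : int -> 'F_l)) /= rmorphXn rmorphB /=.
rewrite rmorphXn rmorphD /= map_polyX !rmorph1.

have chp : l \in [pchar {poly 'F_l}] by rewrite pchar_poly pchar_Fp.
rewrite -(pFrobenius_autE chp) pFrobenius_autD_comm; last exact: commr1.
rewrite !pFrobenius_autE expr1n addrK -exprM coefXn.
by case: (k == _); rewrite ?rmorph1 ?rmorph0 subrr.
Qed.

Lemma coefXadd1 n : ((('X + 1) ^+ n : {poly int})`_0 = 1) /\ ((('X + 1) ^+ n : {poly int})`_1 = n%:R).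
Proof.
elim: n => [|n [h0 h1]]; first by rewrite expr0 !coefC.
rewrite exprSr mulrDr mulr1 !coefD !coefMX /= h0 h1.
by rewrite add0r -addn1 natrD addrC.
Qed.

Section Main.
Variable l : nat.
Hypothesis hl : prime l.

Definition Ev (v : nat -> int) (k : nat) : int :=
  l_minus_psi l (ps_mulT (fun i _ => v i)) k 0%N.

Definition Q (i j : nat) : int :=
  ((psi_coef l i.+1 (l * j.+1)%N - (i == j)%:R) %/ l%:Z)%Z.

Definition Bm (v : nat -> int) (j : nat) : int :=
  v (l * j.+1)%N.-1 - \sum_(i < (l * j.+1)%N) Q i j * v i.

Lemma lgt0 : (0 < l)%N. Proof. exact: prime_gt0. Qed.

Lemma P_dec i j : psi_coef l i.+1 (l * j.+1)%N = (i == j)%:R + l%:Z * Q i j.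
Proof.
rewrite /Q mulrC divzK; first by rewrite addrC subrK.
have := psi_mod hl i.+1 (l * j.+1)%N.
have l0 : (l == 0%N) = false by apply/negbTE; rewrite -lt0n prime_gt0.
by rewrite eqn_mul2l eqSS l0 /= eq_sym.
Qed.

Lemma Amap v j : Ev v (l * j.+1)%N = - v j + l%:Z * Bm v j.
Proof.
rewrite /Ev /l_minus_psi /ps_sub /ps_scale /ps_psi /Bm.
have jlt : (j < l * j.+1)%N.
  by rewrite (leq_trans (ltnSn j)) // leq_pmull ?lgt0.
have hP : forall i, psi_coef l i.+1 (l * j.+1)%N = (i == j)%:R + l%:Z * Q i j by move=> i; exact: P_dec.
move: jlt hP.
have [K hk] : exists K, (l * j.+1)%N = K.+1.
  by exists (l * j.+1)%N.-1; rewrite prednK // muln_gt0 lgt0.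
rewrite hk => jlt hP /=.
rewrite big_ord_recl /= mulr0 add0r.
under eq_bigr => i _ do rewrite hP mulrDl -mulrA.
rewrite big_split /= -mulr_sumr.
rewrite (bigD1 (Ordinal jlt)) //= eqxx mul1r big1 ?addr0; last first.
  by move=> i /negbTE; rewrite -val_eqE /= => ->; rewrite mul0r.
under eq_bigr do rewrite add0n. by rewrite add0n mulrBr opprD addrCA.
Qed.

Lemma Bm_dvd M v : (forall i, (M %| v i)%Z) -> forall j, (M %| Bm v j)%Z.
Proof.
move=> h j; rewrite /Bm rpredB // rpred_sum // => i _.
exact: dvdz_mull.
Qed.

Lemma sub4 (a b c d : int) : a - b - (c - d) = a - c - (b - d).
Proof. by rewrite !opprB addrACA [RHS]addrACA [- c + _]addrC. Qed.

Lemma Bm_sub v w j : Bm (fun i => v i - w i) j = Bm v j - Bm w j.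
Proof.
rewrite /Bm.
under eq_bigr => i _ do rewrite mulrBr.
by rewrite sumrB sub4.
Qed.

Lemma Ev_dvd M v : (forall i, (M %| v i)%Z) -> forall k, (M %| Ev v k)%Z.
Proof.
move=> h k; rewrite /Ev /l_minus_psi /ps_sub /ps_scale /ps_psi /ps_mulT.
rewrite rpredB //.
  by case: k => [|k]; rewrite ?mulr0 ?dvdz0 // dvdz_mull.
rewrite rpred_sum // => -[[|i] hi] _ /=; first by rewrite mulr0 dvdz0.
exact: dvdz_mull.
Qed.

Lemma Ev_sub v w k : Ev (fun i => v i - w i) k = Ev v k - Ev w k.
Proof.
rewrite /Ev /l_minus_psi /ps_sub /ps_scale /ps_psi /ps_mulT.
have hs : forall n : nat, (if n is n'.+1 then v n' - w n' else 0) =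
   (if n is n'.+1 then v n' else 0) - (if n is n'.+1 then w n' else 0).
  by case=> [|n]; rewrite ?subr0.
rewrite hs; under eq_bigr => i _ do rewrite hs mulrBr.
by rewrite sumrB mulrBr sub4.
Qed.

Lemma Ev0 v : Ev v 0 = 0.
Proof. by rewrite /Ev /l_minus_psi /ps_sub /ps_scale /ps_psi /ps_mulT big_ord1 /= !mulr0 subr0. Qed.

Lemma Ev1 v : Ev v 1 = 0.
Proof.
rewrite /Ev /l_minus_psi /ps_sub /ps_scale /ps_psi /ps_mulT big_ord_recl big_ord1 /=.
rewrite mulr0 add0r /psi_coef expr1 coefB (proj2 (coefXadd1 l)) coefC /= subr0. by rewrite add0n -natz subrr.

Qed.

Fixpoint hs (d : nat -> int) (t : nat) : nat -> int :=
  match t with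
  | 0%N => fun _ => 0
  | t.+1 => fun j => - d j + l%:Z * Bm (hs d t) j
  end.

Lemma hs_diff d t j : ((l%:Z) ^+ t %| hs d t.+1 j - hs d t j)%Z.
Proof.
elim: t j => [|t IH] j; first by rewrite expr0 dvd1z.
rewrite /= opprD addrACA subrr add0r -mulrBr.
have -> : Bm (hs d t.+1) j - Bm (hs d t) j = Bm (fun i => hs d t.+1 i - hs d t i) j.
  by rewrite Bm_sub.
by rewrite exprS dvdz_mul // Bm_dvd.
Qed.

Lemma hs_cong M d d' : (forall j, (M %| d' j - d j)%Z) ->
  forall t j, (M %| hs d' t j - hs d t j)%Z.
Proof.
move=> hd; elim => [|t IH] j /=; first by rewrite subr0 dvdz0.
rewrite opprD addrACA -opprD -mulrBr rpredD // ?rpredN //.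
have -> : Bm (hs d' t) j - Bm (hs d t) j = Bm (fun i => hs d' t i - hs d t i) j.
  by rewrite Bm_sub.
by rewrite dvdz_mull // Bm_dvd.
Qed.

Lemma Ev_hs d n j : Ev (hs d n) (l * j.+1)%N = d j + (hs d n.+1 j - hs d n j).
Proof.
rewrite Amap /=.
by rewrite addrA addrA subrr add0r addrC.
Qed.

End Main.

Lemma lmpE l g k n : l_minus_psi l (ps_mulT g) k n = Ev l (fun i => g i n) k.
Proof. by []. Qed.

Lemma MnE l n : (l ^ n)%N%:Z = (l%:Z) ^+ n.
Proof. by rewrite -!natz natrX. Qed.

Lemma tele2 (a b c : int) : a - c = (a - b) + (b - c).
Proof. by rewrite addrA subrK. Qed.

Lemma dvdMn l n : ((l ^ n)%N%:Z %| (l ^ n.+1)%N%:Z)%Z.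
Proof. by rewrite !MnE dvdz_exp2l. Qed.

Lemma series_T2 l f G : is_series l G -> ps_eq l f (ps_mulT (ps_mulT G)) ->
  is_series l f.
Proof.
move=> Gs fG k n; rewrite eqz_mod_dvd.
set H1 := ps_mulT (ps_mulT G) k n.+1; set H0 := ps_mulT (ps_mulT G) k n.
rewrite (tele2 (f k n.+1) H1 (f k n)) (tele2 H1 H0 (f k n)).
apply: rpredD; last apply: rpredD.
- apply: dvdz_trans (dvdMn l n) _; rewrite -eqz_mod_dvd; exact: fG.
- rewrite /H1 /H0; clear H1 H0; case: k => [|[|k]]; rewrite /ps_mulT /= ?subrr ?dvdz0 //.
  rewrite -eqz_mod_dvd; exact: Gs.
- rewrite -opprB rpredN -eqz_mod_dvd; exact: fG.
Qed.

Theorem mainTheorem7 (l : nat) (hl : prime l) (hodd : odd l) :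
  (forall x : pser, in_Xi2 l x -> in_T2Lambda l x) /\
  (forall g : pser, is_series l g -> in_T2Lambda l (l_minus_psi l (ps_mulT g))) /\
  (forall f : pser, in_T2Lambda l f ->
     exists x g : pser, in_Xi2 l x /\ is_series l g /\
       ps_eq l f (ps_add x (l_minus_psi l (ps_mulT g)))) /\
  (forall x g : pser, in_Xi2 l x -> is_series l g ->
     ps_eq l x (l_minus_psi l (ps_mulT g)) -> ps_eq l x ps0).
Proof.
split; [|split; [|split]].
- move=> x [xs xz]; exists (fun k n => x k.+2 n); split.
    by move=> k n; exact: xs k.+2 n.
  move=> [|[|k]] n; rewrite /ps_mulT /=.
  + exact: (xz 0%N isT n).
  + exact: (xz 1%N isT n).
  + exact: eqxx.
- move=> g gs; exists (fun k n => l_minus_psi l (ps_mulT g) k.+2 n); split.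
    move=> k n; rewrite !lmpE eqz_mod_dvd -Ev_sub; apply: Ev_dvd => i.
    rewrite -eqz_mod_dvd; exact: gs.
  move=> [|[|k]] n; rewrite /ps_mulT /= ?lmpE.
  + by rewrite (Ev0 l (fun i => g i n)).
  + by rewrite (Ev1 l (fun i => g i n)).
  + exact: eqxx.
- move=> f [G [Gs fG]].
  have fs := series_T2 Gs fG.
  pose dd n := fun j => f (l * j.+1)%N n.
  pose g : pser := fun j n => hs l (dd n) n j.
  pose x : pser := fun k n => f k n - Ev l (fun i => g i n) k.
  have gs : is_series l g.
    move=> j n; rewrite eqz_mod_dvd /g (tele2 _ (hs l (dd n.+1) n j)).
    apply: rpredD.
      by rewrite MnE; exact: hs_diff.
    apply: hs_cong => i; rewrite -eqz_mod_dvd; exact: fs.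
  exists x, g; split; [split|split].
  + move=> k n; rewrite eqz_mod_dvd /x sub4; apply: rpredB.
      by rewrite -eqz_mod_dvd; exact: fs.
    rewrite -Ev_sub; apply: Ev_dvd => i; rewrite -eqz_mod_dvd; exact: gs.
  + move=> k hk n; rewrite eqz_mod_dvd subr0 /x.
    case: k hk => [|[|k]] hk.
    * rewrite (Ev0 l (fun i => g i n)) subr0.
      by have := fG 0%N n; rewrite /ps_mulT /= eqz_mod_dvd subr0.
    * rewrite (Ev1 l (fun i => g i n)) subr0.
      by have := fG 1%N n; rewrite /ps_mulT /= eqz_mod_dvd subr0.
    * move: hk => /= hk.
      have lk : (k.+2 %/ l)%N.-1.+1 = (k.+2 %/ l)%N.
        by rewrite prednK // divn_gt0 ?prime_gt0 // dvdn_leq.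
      have hk2 : k.+2 = (l * (k.+2 %/ l)%N.-1.+1)%N by rewrite lk mulnC divnK.
      rewrite hk2.
      set j := (k.+2 %/ l)%N.-1.
      have -> : Ev l (fun i => g i n) (l * j.+1)%N = dd n j + (hs l (dd n) n.+1 j - hs l (dd n) n j).
        exact: (Ev_hs hl (dd n) n j).
      rewrite /dd opprD addrA subrr add0r rpredN MnE; exact: hs_diff.
  + exact: gs.
  + move=> k n; rewrite /ps_add /x lmpE subrK; exact: eqxx.
- move=> x g [xs xz] gs hx k n.
  set M := (l ^ n)%N%:Z.
  have hE : forall j, (M %| Ev l (fun i => g i n) (l * j.+1)%N)%Z.
    move=> j; have h1 := hx (l * j.+1)%N n; rewrite lmpE eqz_mod_dvd in h1.
    have h2 : (x (l * j.+1)%N n == 0 %[mod M])%Z.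
      by apply: (xz (l * j.+1)%N); rewrite dvdn_mulr ?orbT.
    rewrite eqz_mod_dvd subr0 in h2.
    have -> : Ev l (fun i => g i n) (l * j.+1)%N =
      x (l * j.+1)%N n - (x (l * j.+1)%N n - Ev l (fun i => g i n) (l * j.+1)%N).
      by rewrite opprB addrC subrK.
    exact: rpredB.
  have hv : forall t, (t <= n)%N -> forall i, ((l%:Z) ^+ t %| g i n)%Z.
    elim=> [|t IH] ht i; first by rewrite expr0 dvd1z.
    have heq := Amap hl (fun i => g i n) i.
    have -> : g i n = l%:Z * Bm l (fun i => g i n) i - Ev l (fun i => g i n) (l * i.+1)%N.
      by rewrite heq opprD opprK addrC subrK.
    apply: rpredB.
      by rewrite exprS dvdz_mul // Bm_dvd // => i'; apply: IH; exact: ltnW.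
    apply: dvdz_trans (hE i); rewrite /M MnE dvdz_exp2l //.
  have hv' : forall i, (M %| g i n)%Z by move=> i; rewrite /M MnE; exact: hv.
  rewrite eqz_mod_dvd /ps0 subr0.
  have := hx k n; rewrite lmpE eqz_mod_dvd => h.
  rewrite -(subrK (Ev l (fun i => g i n) k) (x k n)); apply: rpredD => //.
  exact: Ev_dvd.
Qed.
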